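(* In the setting of the context, with $V(\mathbf{x})=\sum_{\mathbf{n}=\mathbf{x}}^{\boldsymbol{\ell}}\mathscr{C}_{\mathbf{n},\mathbf{x}}V^{\mathbf{n}}$ where $\mathscr{C}_{\mathbf{n},\mathbf{x}}=\frac{(-1)^{|\mathbf{n}|-|\mathbf{x}|}}{(2|\mathbf{x}|+\omega+1)_{|\mathbf{n}|-|\mathbf{x}|}}\prod_{p=1}^N\binom{n_p}{x_p}(|\mathbf{n}|_1^{p-1}+|\mathbf{x}|_1^{p}+|\boldsymbol{\ell}|_p^N+a_p+\omega+1)_{n_p-x_p}$, the inverse change of basis is: for every $\mathbf{n}$ with $0\le n_p\le\ell_p$, \[ V^{\mathbf{n}}=\sum_{\mathbf{x}=\mathbf{n}}^{\boldsymbol{\ell}}\overline{\mathscr{C}}_{\mathbf{x},\mathbf{n}}V(\mathbf{x}),\qquad \overline{\mathscr{C}}_{\mathbf{x},\mathbf{n}}=\frac{1}{(|\mathbf{n}|+|\mathbf{x}|+\omega)_{|\mathbf{x}|-|\mathbf{n}|}}\prod_{p=1}^N\binom{x_p}{n_p}\big(|\mathbf{n}|_1^{p}+|\mathbf{x}|_1^{p-1}+|\boldsymbol{\ell}|_p^N+a_p+\omega+1\big)_{x_p-n_p}. \]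
   Context: Notation: for $N$-tuples of integers, $|\mathbf{n}|_j^k=\sum_{p=j}^k n_p$ (equal to $0$ if $j>k$), $|\mathbf{n}|=|\mathbf{n}|_1^N$; $(x)_k=x(x+1)\cdots(x+k-1)$, $(x)_0=1$. A sum $\sum_{\mathbf{n}=\mathbf{a}}^{\mathbf{b}}$ means the sum over all $\mathbf{n}$ with $a_p\le n_p\le b_p$ for every $p$. Setting: $N\ge1$, $\boldsymbol{\ell}=(\ell_1,\dots,\ell_N)$ nonnegative integers, $\mathcal{V}=\mathbb{C}^{\ell_1+1}\otimes\cdots\otimes\mathbb{C}^{\ell_N+1}$ with basis $V^{\mathbf{n}}$, $0\le n_p\le\ell_p$. Scalars $\theta_0,\theta_0^\star,h,h^\star,\omega,\omega^\star,a_1,\dots,a_N\in\mathbb{C}$ satisfy the standing constraints: $h,h^\star\neq0$; $\omega,\omega^\star\notin\{-2|\boldsymbol{\ell}|+1,\dots,-1\}$; for each $i$, none of $a_i,\ a_i+\omega-\omega^\star,\ a_i-|\boldsymbol{\ell}|-\omega^\star,\ a_i+|\boldsymbol{\ell}|+\omega$ lies in $\{-\ell_i,\dots,-1\}$; and with $S^\pm(\ell,a)=\{\pm(a+k+\tfrac12(\omega-\omega^\star)):k=1,\dots,\ell\}$, for all $i,j$ and signs, $S^{\epsilon_i}(\ell_i,a_i)$ and $S^{\epsilon_j}(\ell_j,a_j)$ are in general position (one contains the other or their union is not a string). *)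

(* Defs.v *)
From HB Require Import structures.
From mathcomp Require Import all_boot all_order all_algebra.
From mathcomp Require Import reals.
From mathcomp Require Import complex.
Set Implicit Arguments. Unset Strict Implicit. Unset Printing Implicit Defensive.
Import Order.TTheory GRing.Theory Num.Theory.
Local Open Scope ring_scope.

Definition poch (F : pzRingType) (x : F) (k : nat) : F :=
  \prod_(j < k) (x + j%:R).

(* Multi-indices n = (n_1,...,n_N), encoded as finite functions 'I_N -> 'I_(L.+1)
   with L = |l|; coordinate p (1-indexed in the paper) is index p-1 here. *)
Definition tot (N : nat) (l : 'I_N -> nat) : nat := \sum_(p < N) l p.
Definition mindex (N : nat) (l : 'I_N -> nat) := {ffun 'I_N -> 'I_(tot l).+1}.

(* |n|_{i+1}^{k} style partial sums, with 0-indexed coordinates: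
   psum_lt n i = |n|_1^{p-1}, psum_le n i = |n|_1^{p}, psum_ge n i = |n|_p^N
   where p = i+1. *)
Definition psum_lt (N : nat) (n : 'I_N -> nat) (i : 'I_N) : nat :=
  \sum_(q < N | (q < i)%N) n q.
Definition psum_le (N : nat) (n : 'I_N -> nat) (i : 'I_N) : nat :=
  \sum_(q < N | (q <= i)%N) n q.
Definition psum_ge (N : nat) (n : 'I_N -> nat) (i : 'I_N) : nat :=
  \sum_(q < N | (i <= q)%N) n q.
Definition msize (N : nat) (n : 'I_N -> nat) : nat := \sum_(q < N) n q.

Definition mi (N : nat) (l : 'I_N -> nat) (n : mindex l) : 'I_N -> nat :=
  fun p => nat_of_ord (n p).

Definition inbox (N : nat) (l : 'I_N -> nat) (x n : mindex l) : bool :=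
  [forall p, (mi x p <= mi n p <= l p)%N].

(* The vector space V = C^{l_1+1} (x) ... (x) C^{l_N+1}, realized as coordinate
   functions on multi-indices; the basis vector V^n is the indicator of n.
   (Coordinates at multi-indices outside the box 0 <= n <= l are never used:
   all vectors considered below vanish there.) *)
Definition basisV (R : realType) (N : nat) (l : 'I_N -> nat) (n : mindex l)
  : {ffun mindex l -> R[i]} := [ffun m => (m == n)%:R].

Arguments basisV {R N l} n.

Definition coefC (R : realType) (N : nat) (l : 'I_N -> nat) (a : 'I_N -> R[i])
    (om : R[i]) (n x : mindex l) : R[i] :=
  (-1) ^+ (msize (mi n) - msize (mi x))
  / poch ((2 * msize (mi x))%:R + om + 1) (msize (mi n) - msize (mi x))
  * \prod_(p < N)
      ('C(mi n p, mi x p)%:R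
       * poch ((psum_lt (mi n) p + psum_le (mi x) p + psum_ge l p)%:R
               + a p + om + 1) (mi n p - mi x p)).

Definition coefCbar (R : realType) (N : nat) (l : 'I_N -> nat) (a : 'I_N -> R[i])
    (om : R[i]) (x n : mindex l) : R[i] :=
  1 / poch ((msize (mi n) + msize (mi x))%:R + om) (msize (mi x) - msize (mi n))
  * \prod_(p < N)
      ('C(mi x p, mi n p)%:R
       * poch ((psum_le (mi n) p + psum_lt (mi x) p + psum_ge l p)%:R
               + a p + om + 1) (mi x p - mi n p)).

Definition Vx (R : realType) (N : nat) (l : 'I_N -> nat) (a : 'I_N -> R[i])
    (om : R[i]) (x : mindex l) : {ffun mindex l -> R[i]} :=
  \sum_(n : mindex l | inbox x n) coefC a om n x *: basisV n.

Definition mzero (N : nat) (l : 'I_N -> nat) : mindex l := [ffun _ => ord0].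

Definition in_neg_range (F : pzRingType) (z : F) (m : nat) : Prop :=
  exists2 k : nat, (1 <= k <= m)%N & z = - k%:R.

Definition Sset (R : realType) (plus : bool) (lp : nat) (ap d : R[i]) : R[i] -> Prop :=
  fun z => exists2 k : nat, (1 <= k <= lp)%N &
    z = (if plus then 1 else -1) * (ap + k%:R + d).

Definition is_string (F : pzRingType) (S : F -> Prop) : Prop :=
  exists (c : F) (m : nat), forall z, S z <-> exists2 k : nat, (k <= m)%N & z = c + k%:R.

Definition gen_pos (F : pzRingType) (S T : F -> Prop) : Prop :=
  (forall z, S z -> T z) \/ (forall z, T z -> S z) \/
  ~ is_string (fun z => S z \/ T z).

Definition standing (R : realType) (N : nat) (l : 'I_N -> nat)
    (th0 th0s h hs om oms : R[i]) (a : 'I_N -> R[i]) : Prop :=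
  (1 <= N)%N /\ h != 0 /\ hs != 0 /\
      ~ in_neg_range om (2 * tot l).-1 /\ ~ in_neg_range oms (2 * tot l).-1 /\
      (forall i : 'I_N,
         [/\ ~ in_neg_range (a i) (l i),
             ~ in_neg_range (a i + om - oms) (l i),
             ~ in_neg_range (a i - (tot l)%:R - oms) (l i) &
             ~ in_neg_range (a i + (tot l)%:R + om) (l i)]) /\
      (forall (i j : 'I_N) (ei ej : bool),
         gen_pos (Sset ei (l i) (a i) ((om - oms) / 2))
                 (Sset ej (l j) (a j) ((om - oms) / 2))).

(* Main.v *)
Require Import Defs.
From HB Require Import structures.
From mathcomp Require Import all_boot all_order all_algebra.
From mathcomp Require Import reals complex.
From mathcomp Require Import ring zify.
Import Order.TTheory GRing.Theory Num.Theory.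
Local Open Scope ring_scope.
Lemma poch0 (F : pzRingType) (x : F) : poch x 0 = 1.
Proof. by rewrite /poch big_ord0. Qed.

Lemma pochS (F : pzRingType) (x : F) k : poch x k.+1 = poch x k * (x + k%:R).
Proof. by rewrite /poch big_ord_recr. Qed.

Lemma pochSl (F : comPzRingType) (x : F) k : poch x k.+1 = x * poch (x + 1) k.
Proof.
rewrite /poch big_ord_recl /= addr0; congr (_ * _); apply: eq_bigr => j _.
rewrite /bump /= add1n -addn1 natrD. ring.
Qed.

Lemma poch_add (F : pzRingType) (x : F) i j :
  poch x (i + j) = poch x i * poch (x + i%:R) j.
Proof.
rewrite /poch big_split_ord; congr (_ * _); apply: eq_bigr => k _.
by rewrite /= natrD addrA.
Qed.

Lemma poch_zero (F : comPzRingType) (x : F) k j : (j < k)%N -> x + j%:R = 0 -> poch x k = 0.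
Proof.
move=> jk h; rewrite /poch (bigD1 (Ordinal jk)) //= h mul0r //.
Qed.

Lemma CV (F : comPzRingType) M (a b : F) :
  \sum_(y < M.+1) 'C(M, y)%:R * (-1) ^+ y * poch a y * poch (b + y%:R) (M - y)
  = poch (b - a) M.
Proof.
elim: M a b => [|M IH] a b.
  by rewrite big_ord1 /= !poch0 bin0 expr0 !mulr1.
have E1 : \sum_(i < M.+2) 'C(M, i)%:R * (-1) ^+ i * poch a i * poch (b + i%:R) (M.+1 - i)
    = (b + M%:R) * poch (b - a) M.
  rewrite big_ord_recr /= bin_small // mul0r mul0r mul0r addr0.
  rewrite -IH mulr_sumr; apply: eq_bigr => i _.
  have hi : (i <= M)%N by rewrite -ltnS.
  rewrite subSn // pochS natrB // -addrA (addrC i%:R) subrK; ring.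
have E2 : \sum_(i < M.+1) 'C(M, i)%:R * (-1) ^+ i.+1 * poch a i.+1 * poch (b + i.+1%:R) (M - i)
    = - a * poch (b - a) M.
  have := IH (a + 1) (b + 1); rewrite (_ : b + 1 - (a + 1) = b - a); last by ring.
  move=> <-; rewrite mulr_sumr; apply: eq_bigr => i _.
  rewrite pochSl exprS -(addn1 i) natrD (addrC i%:R 1) addrA; ring.
rewrite big_ord_recl /=.
rewrite (big_ord_recl M.+1) in E1.
rewrite (_ : \sum_(i < M.+1) 'C(M.+1, bump 0 i)%:R * (-1) ^+ bump 0 i * poch a (bump 0 i) *
   poch (b + (bump 0 i)%:R) (M.+1 - bump 0 i) =
   \sum_(i < M.+1) 'C(M, i.+1)%:R * (-1) ^+ i.+1 * poch a i.+1 * poch (b + i.+1%:R) (M.+1 - i.+1) +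
   \sum_(i < M.+1) 'C(M, i)%:R * (-1) ^+ i.+1 * poch a i.+1 * poch (b + i.+1%:R) (M - i)).
  rewrite addrA.
  rewrite (_ : 'C(M.+1, 0)%:R * (-1) ^+ 0 * poch a 0 * poch (b + 0%:R) (M.+1 - 0) = 
     'C(M, 0)%:R * (-1) ^+ 0 * poch a 0 * poch (b + 0%:R) (M.+1 - 0)); last by rewrite !bin0.
  rewrite E1 E2 pochS.
  ring.
rewrite -big_split; apply: eq_bigr => i _.
by rewrite /bump /= add1n binS natrD subSS; ring.
Qed.
Arguments CV {F}.

Definition Tf (F : comPzRingType) (M D : nat) (g : F) (f : F -> F) (u : F) : F :=
  \sum_(y < M.+1) 'C(M, y)%:R * (-1) ^+ y * poch (u + g) y
     * poch (u + y%:R + D%:R + g) (M - y) * f (u + y%:R).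
Arguments Tf {F}.

Lemma Tf_poch (F : comPzRingType) (M D : nat) (g : F) k u :
  Tf M D g (fun v => poch (v + g) k) u = poch (D%:R - k%:R) M * poch (u + g) k.
Proof.
rewrite (_ : D%:R - k%:R = u + g + D%:R - (u + g + k%:R)); last by ring.
rewrite /Tf -(CV M (u + g + k%:R) (u + g + D%:R)) mulr_suml.
apply: eq_bigr => y _.
have E : poch (u + g) y * poch (u + y%:R + g) k = poch (u + g) k * poch (u + g + k%:R) y.
  by rewrite (addrAC u) -!poch_add addnC.
rewrite (_ : u + y%:R + D%:R + g = u + g + D%:R + y%:R); last by ring.
transitivity ('C(M, y)%:R * (-1) ^+ y * poch (u + g + D%:R + y%:R) (M - y) *
  (poch (u + g) y * poch (u + y%:R + g) k)); first by ring.
rewrite E; ring.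
Qed.

Lemma Tf_ext (F : comPzRingType) (M D : nat) (g : F) f h u :
  (forall v, f v = h v) -> Tf M D g f u = Tf M D g h u.
Proof. by move=> e; apply: eq_bigr => y _; rewrite e. Qed.

Lemma Tf_lin (F : comPzRingType) (M D : nat) (g : F) c f h u :
  Tf M D g (fun v => c * f v + h v) u = c * Tf M D g f u + Tf M D g h u.
Proof.
rewrite /Tf mulr_sumr -big_split; apply: eq_bigr => y _ /=; ring.
Qed.

Definition deg_lt (F : fieldType) (s : nat) (f : F -> F) :=
  exists Q : {poly F}, (size Q <= s)%N /\ forall u, f u = Q.[u].
Arguments deg_lt {F}.

Definition pochP (F : fieldType) (g : F) k : {poly F} :=
  \prod_(j < k) ('X - (- (g + j%:R))%:P).
Arguments pochP {F}.

Lemma pochP_eval (F : fieldType) (g : F) k u : (pochP g k).[u] = poch (u + g) k.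
Proof.
rewrite /pochP horner_prod /poch; apply: eq_bigr => j _.
by rewrite hornerXsubC opprK addrA.
Qed.

Lemma size_pochP (F : fieldType) (g : F) k : size (pochP g k) = k.+1.
Proof. by rewrite /pochP size_prod_XsubC /index_enum unlock -enumT -cardT card_ord. Qed.

Lemma coef_pochP (F : fieldType) (g : F) k : (pochP g k)`_k = 1.
Proof.
have := monic_prod_XsubC (index_enum 'I_k) predT (fun j : 'I_k => - (g + j%:R)).
by move/monicP; rewrite lead_coefE -/(pochP g k) size_pochP.
Qed.

Lemma deg_lt_ext (F : fieldType) s (f h : F -> F) :
  (forall u, f u = h u) -> deg_lt s f -> deg_lt s h.
Proof. by move=> e [Q [hs hQ]]; exists Q; split => // u; rewrite -e. Qed.

Lemma deg_lt_lin (F : fieldType) s c (f h : F -> F) :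
  deg_lt s f -> deg_lt s h -> deg_lt s (fun u => c * f u + h u).
Proof.
move=> [Q [hs hQ]] [P [hs' hP]]; exists (c *: Q + P); split.
  apply: leq_trans (size_add _ _) _; rewrite geq_max hs' andbT.
  exact: leq_trans (size_scale_leq _ _) hs.
by move=> u; rewrite hornerD hornerZ hQ hP.
Qed.

Lemma deg_lt_leq (F : fieldType) s s' (f : F -> F) :
  (s <= s')%N -> deg_lt s f -> deg_lt s' f.
Proof. by move=> ss [Q [hs hQ]]; exists Q; split => //; apply: leq_trans ss. Qed.

Lemma deg_lt_poch (F : fieldType) (g : F) k : deg_lt k.+1 (fun u => poch (u + g) k).
Proof. by exists (pochP g k); rewrite size_pochP; split => // u; rewrite pochP_eval. Qed.

Lemma deg_lt_0 (F : fieldType) (f : F -> F) u : deg_lt 0 f -> f u = 0.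
Proof.
move=> [Q [hs hQ]]; move: hs; rewrite leqn0 size_poly_eq0 => /eqP Q0.
by rewrite hQ Q0 horner0.
Qed.
Arguments deg_lt_0 {F f}.

Lemma deg_lt_split (F : fieldType) (g : F) s (f : F -> F) :
  deg_lt s.+1 f -> exists c, deg_lt s (fun u => f u - c * poch (u + g) s).
Proof.
move=> [Q [hs hQ]]; exists Q`_s; exists (Q - Q`_s *: pochP g s); split.
  apply/leq_sizeP => j hj; rewrite coefB coefZ.
  case: (ltngtP j s) hj => // [js _|<- _]; last by rewrite coef_pochP mulr1 subrr.
  move/leq_sizeP: hs => /(_ j js) ->.
  have : (size (pochP g s) <= j)%N by rewrite size_pochP.
  by move/leq_sizeP => /(_ j (leqnn j)) ->; rewrite mulr0 subrr.
by move=> u; rewrite hornerD hornerN hornerZ pochP_eval hQ.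
Qed.

Arguments deg_lt_split {F} g {s f}.
Arguments deg_lt_poch {F}.
Arguments deg_lt_leq {F s s' f}.
Arguments deg_lt_lin {F s}.
Arguments deg_lt_ext {F s f h}.

Lemma Tf_deg (F : fieldType) (M D : nat) (g : F) s (f : F -> F) :
  (s <= D + M)%N -> deg_lt s f -> deg_lt D (Tf M D g f).
Proof.
elim: s f => [|s IH] f hs hf.
  exists 0; split; first by rewrite size_poly0.
  move=> u; rewrite horner0 /Tf big1 // => y _.
  by rewrite (deg_lt_0 _ hf) mulr0.
have [c hc] := deg_lt_split g hf.
have IHf := IH _ (ltnW hs) hc.
have E : forall u, Tf M D g f u = c * (poch (D%:R - s%:R) M * poch (u + g) s)
     + Tf M D g (fun u => f u - c * poch (u + g) s) u.
  move=> u; rewrite -Tf_poch -Tf_lin; apply: Tf_ext => v; ring.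
case: (ltnP s D) => sD.
  apply: (deg_lt_ext (f := fun u => (c * poch (D%:R - s%:R) M) * poch (u + g) s
      + Tf M D g (fun u0 : F => f u0 - c * poch (u0 + g) s) u)).
    by move=> u; rewrite E; ring.
  by apply: deg_lt_lin => //; apply: deg_lt_leq (deg_lt_poch g s).
apply: deg_lt_ext IHf => u.
rewrite E (@poch_zero _ _ _ (s - D)) ?mul0r ?mulr0 ?add0r //.
  by rewrite ltn_subLR // addnC.
by rewrite natrB //; ring.
Qed.

Definition Ylt (N : nat) (u v : 'I_N -> nat) (k : nat) : nat :=
  \sum_(q < N | (q < k)%N) (u q - v q).
Arguments Ylt {N}.

Definition agree (N : nat) (l : 'I_N -> nat) (k : nat) (z x : mindex l) : bool :=
  [forall q : 'I_N, (q < k)%N ==> (x q == z q)].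
Arguments agree {N l}.

Definition wt (F : pzRingType) (N : nat) (l : 'I_N -> nat) (G : 'I_N -> F)
   (n m x : mindex l) (p : 'I_N) : F :=
  'C(mi m p - mi n p, mi x p - mi n p)%:R * (-1) ^+ (mi x p - mi n p)
  * poch ((Ylt (mi x) (mi n) p)%:R + G p) (mi x p - mi n p)
  * poch ((Ylt (mi x) (mi n) p + (mi x p - mi n p) + Ylt (mi m) (mi n) p)%:R + G p)
         ((mi m p - mi n p) - (mi x p - mi n p)).
Arguments wt {F N l}.

Lemma Ylt_S (N : nat) (u v : 'I_N -> nat) (k : nat) (kN : (k < N)%N) :
  (Ylt u v k.+1 = Ylt u v k + (u (Ordinal kN) - v (Ordinal kN)))%N.
Proof.
rewrite /Ylt (bigD1 (Ordinal kN)) //= addnC; congr (_ + _).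
apply: eq_bigl => q; rewrite ltnS -val_eqE /=.
by case: ltngtP.
Qed.

Lemma Ylt_agree (N : nat) (l : 'I_N -> nat) (k : nat) (z x n : mindex l) :
  agree k z x -> Ylt (mi x) (mi n) k = Ylt (mi z) (mi n) k.
Proof.
move/forallP => h; apply: eq_bigr => q qk.
by rewrite /mi; have /eqP -> := implyP (h q) qk.
Qed.

Lemma agreeS (N : nat) (l : 'I_N -> nat) (k : nat) (kN : (k < N)%N) (z x : mindex l)
   (j : 'I_(tot l).+1) :
  agree k.+1 [ffun q => if q == Ordinal kN then j else z q] x
  = agree k z x && (x (Ordinal kN) == j).
Proof.
apply/forallP/andP => [h|[/forallP h1 /eqP h2] q].
  split.
    apply/forallP => q; apply/implyP => qk.
    have := implyP (h q) (ltnW qk); rewrite ffunE.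
    have -> : (q == Ordinal kN) = false by rewrite -val_eqE /= ltn_eqF.
    by [].
  by have := implyP (h (Ordinal kN)) (ltnSn k); rewrite ffunE eqxx.
apply/implyP; rewrite ltnS ffunE leq_eqVlt => /orP [qk|qk].
  have /eqP qe : q == Ordinal kN by rewrite -val_eqE.
  by rewrite qe eqxx h2.
rewrite (_ : (q == Ordinal kN) = false) ?(implyP (h1 q) qk) //.
by rewrite -val_eqE /= ltn_eqF.
Qed.

Lemma sum_window (F : pzRingType) (K a b : nat) (h : nat -> F) :
  (a <= b)%N -> (b < K)%N ->
  \sum_(j : 'I_K) (if (a <= j <= b)%N then h (j - a)%N else 0)
  = \sum_(y < (b - a)%N.+1) h y.
Proof.
move=> ab bK.
rewrite -(big_mkord xpredT (fun j => if (a <= j <= b)%N then h (j - a)%N else 0)).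
rewrite (big_cat_nat (n := a)) //=; last by apply: leq_trans (ltnW bK).
rewrite big1_seq ?add0r; last first.
  move=> j; rewrite mem_index_iota => hj.
  by have -> : (a <= j)%N = false by lia.
rewrite (big_cat_nat (n := b.+1)) //=.
rewrite [X in _ + X]big1_seq ?addr0; last first.
  move=> j; rewrite mem_index_iota => hj.
  have -> : (j <= b)%N = false by lia.
  by rewrite andbF.
rewrite -{1}(add0n a) big_addn big_mkord subSn //.
apply: eq_bigr => y _; have hy := ltn_ord y.
rewrite addnK.
have -> : (a <= y + a <= b)%N by lia.
by [].
lia.
Qed.

Lemma boxP (N : nat) (l : 'I_N -> nat) (n m x : mindex l) :
  inbox n m ->
  (inbox n x && inbox x m) = [forall p, (mi n p <= mi x p <= mi m p)%N].
Proof.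
move/forallP => hnm; apply/andP/forallP => [[/forallP h1 /forallP h2] p | h].
  by move: (h1 p) (h2 p); lia.
by split; apply/forallP => p; move: (h p) (hnm p); lia.
Qed.

Lemma key_claim (F : fieldType) (N : nat) (l : 'I_N -> nat) (n m : mindex l)
    (G : 'I_N -> F) (P : F -> F) :
  inbox n m -> deg_lt (Ylt (mi m) (mi n) N) P ->
  forall i, (i <= N)%N ->
  exists Q, deg_lt (Ylt (mi m) (mi n) (N - i)) Q /\
    forall z : mindex l,
      (forall q : 'I_N, (q < N - i)%N -> (mi n q <= mi z q <= mi m q)%N) ->
      \sum_(x : mindex l | inbox n x && inbox x m && agree (N - i) z x)
         (\prod_(p < N | (N - i <= p)%N) wt G n m x p) * P (Ylt (mi x) (mi n) N)%:R
      = Q (Ylt (mi z) (mi n) (N - i))%:R.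
Proof.
move=> hnm hP; elim => [|i IH] hi.
  exists P; rewrite subn0; split => // z hz.
  rewrite (big_pred1 z) => [|x].
    by rewrite big_pred0 ?mul1r // => p; rewrite leqNgt ltn_ord.
  have -> : agree N z x = (x == z).
    apply/forallP/eqP => [h|->]; last by move=> q; rewrite eqxx implybT.
    by apply/ffunP => p; apply/eqP; exact: (implyP (h p) (ltn_ord p)).
  have [->|ne] := eqVneq x z; last by rewrite andbF; apply/esym/negbTE; exact: ne.
  rewrite andbT /= eqxx boxP //; apply/forallP => p; exact: hz p (ltn_ord p).
have kN : (N - i.+1 < N)%N by lia.
have e : (N - i = (N - i.+1).+1)%N by lia.
move: (IH (ltnW hi)); rewrite e; set k := (N - i.+1)%N in kN e *.
move=> [Q [hQ hQz]].
set kk := Ordinal kN.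
exists (Tf (mi m kk - mi n kk)%N (Ylt (mi m) (mi n) k) (G kk) Q); split.
  by apply: Tf_deg hQ; rewrite (@Ylt_S N _ _ k kN).
move=> z hz.
have Hprod : forall x, \prod_(p < N | (k <= p)%N) wt G n m x p
    = wt G n m x kk * \prod_(p < N | (k.+1 <= p)%N) wt G n m x p.
  move=> x; rewrite (bigD1 kk) //=; congr (_ * _); apply: eq_bigl => p.
  by rewrite -val_eqE /= ltn_neqAle andbC eq_sym.
rewrite (partition_big (fun x : mindex l => x kk) xpredT) //.
set u : F := (Ylt (mi z) (mi n) k)%:R.
set MM := (mi m kk - mi n kk)%N.
set DD := Ylt (mi m) (mi n) k.
rewrite /Tf -(@sum_window F (tot l).+1 (mi n kk) (mi m kk) (fun y : nat =>
  'C(MM, y)%:R * (-1) ^+ y * poch (u + G kk) y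
     * poch (u + y%:R + DD%:R + G kk) (MM - y) * Q (u + y%:R))); first last.
- move/forallP: hnm => /(_ kk); rewrite /tot => /andP [_ h].
  apply: leq_ltn_trans h _; rewrite ltnS.
  by rewrite (bigD1 kk) //= leq_addr.
- by move/forallP: hnm => /(_ kk) /andP [].
apply: eq_bigr => j _.
case: ifP => hj; last first.
  rewrite big_pred0 // => x.
  apply/negP => /andP [/andP [hb _] /eqP hx].
  move: hb; rewrite boxP // => /forallP /(_ kk); rewrite /mi hx hj.
  by [].
set z' : mindex l := [ffun q => if q == kk then j else z q].
have hz' : forall q : 'I_N, (q < k.+1)%N -> (mi n q <= mi z' q <= mi m q)%N.
  move=> q; rewrite /mi ffunE ltnS leq_eqVlt => /orP [qk|qk].
    have /eqP -> : q == kk by rewrite -val_eqE.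
    by rewrite eqxx; exact: hj.
  rewrite (_ : (q == kk) = false); first by apply: hz.
  by rewrite -val_eqE /= ltn_eqF.
have az : agree k z z'.
  apply/forallP => q; apply/implyP => qk; rewrite ffunE.
  by rewrite (_ : (q == kk) = false) // -val_eqE /= ltn_eqF.
set W : F := 'C(MM, j - mi n kk)%:R * (-1) ^+ (j - mi n kk)%N
  * poch (u + G kk) (j - mi n kk)
  * poch ((Ylt (mi z) (mi n) k + (j - mi n kk) + DD)%:R + G kk) (MM - (j - mi n kk)).
rewrite (eq_bigr (fun x => W * (\prod_(p < N | (k.+1 <= p)%N) wt G n m x p
     * P (Ylt (mi x) (mi n) N)%:R))); last first.
  move=> x /andP [/andP [_ ax] /eqP xj].
  rewrite Hprod -mulrA; congr (_ * _).
  rewrite /wt /= (@Ylt_agree _ _ _ _ _ n ax) /W /u /MM /DD /mi xj.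
  by [].
rewrite -mulr_sumr.
rewrite (eq_bigl (fun x => inbox n x && inbox x m && agree k.+1 z' x)); last first.
  by move=> x; rewrite agreeS andbA.
rewrite hQz // (@Ylt_S N _ _ k kN) (@Ylt_agree _ _ _ _ _ n az) /mi ffunE eqxx.
rewrite /W !natrD /u; ring.
Qed.

Lemma Ylt0 (N : nat) (u v : 'I_N -> nat) : Ylt u v 0 = 0%N.
Proof. by rewrite /Ylt big_pred0. Qed.

Lemma key (F : fieldType) (N : nat) (l : 'I_N -> nat) (n m : mindex l)
    (G : 'I_N -> F) (P : F -> F) :
  inbox n m -> deg_lt (Ylt (mi m) (mi n) N) P ->
  \sum_(x : mindex l | inbox n x && inbox x m)
     (\prod_(p < N) wt G n m x p) * P (Ylt (mi x) (mi n) N)%:R = 0.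
Proof.
move=> hnm hP.
have [Q [hQ hQz]] := @key_claim F N l n m G P hnm hP N (leqnn N).
move: hQ hQz; rewrite subnn Ylt0 => hQ hQz.
have := hQz n (fun q (hq : (q < 0)%N) => ltac:(by [])).
rewrite Ylt0 (deg_lt_0 _ hQ) => h; apply: (etrans _ h).
apply: eq_big => [x|x _].
  have -> : agree 0 n x by apply/forallP.
  by rewrite andbT.
by congr (_ * _); apply: eq_bigl.
Qed.

Lemma binC (n x m : nat) : (n <= x)%N -> (x <= m)%N ->
  ('C(m, x) * 'C(x, n) = 'C(m, n) * 'C(m - n, x - n))%N.
Proof.
move=> nx xm.
have h1 := bin_fact xm.
have h2 := bin_fact nx.
have h3 := bin_fact (leq_trans nx xm).
have h4 : (x - n <= m - n)%N by lia.
have h5 := bin_fact h4.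
have e : (m - n - (x - n) = m - x)%N by lia.
rewrite e in h5.
apply/eqP; rewrite -(@eqn_pmul2r (n`! * (x - n)`! * (m - x)`!)); last first.
  by rewrite !muln_gt0 !fact_gt0.
apply/eqP.
transitivity ('C(m, x) * ('C(x, n) * (n`! * (x - n)`!)) * (m - x)`!)%N; first by ring.
rewrite h2 -mulnA h1.
transitivity ('C(m, n) * (n`! * ('C(m - n, x - n) * ((x - n)`! * (m - x)`!))))%N;
  last by ring.
by rewrite h5 h3.
Qed.

Lemma inboxP (N : nat) (l : 'I_N -> nat) (u v : mindex l) :
  inbox u v -> forall p, (mi u p <= mi v p <= l p)%N.
Proof. by move/forallP. Qed.
Arguments inboxP {N l u v}.

Lemma psum_lt_split (N : nat) (u v : 'I_N -> nat) (p : 'I_N) :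
  (forall q, v q <= u q)%N -> psum_lt u p = (Ylt u v p + psum_lt v p)%N.
Proof.
move=> h; rewrite /psum_lt /Ylt -big_split; apply: eq_bigr => q _.
by rewrite /= subnK.
Qed.

Lemma msize_split (N : nat) (u v : 'I_N -> nat) :
  (forall q, v q <= u q)%N -> msize u = (Ylt u v N + msize v)%N.
Proof.
move=> h; rewrite /msize /Ylt.
have -> : (\sum_(q < N | (q < N)%N) (u q - v q) = \sum_(q < N) (u q - v q))%N.
  by apply: eq_bigl => q; rewrite ltn_ord.
rewrite -big_split.
by apply: eq_bigr => q _; rewrite /= subnK.
Qed.

Lemma psum_le_lt (N : nat) (u : 'I_N -> nat) (p : 'I_N) :
  psum_le u p = (psum_lt u p + u p)%N.
Proof.
rewrite /psum_le (bigD1 p) //= addnC; congr (_ + _).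
apply: eq_bigl => q; rewrite ltn_neqAle -val_eqE /=.
by rewrite andbC.
Qed.

Lemma Ylt_le (N : nat) (u v w : 'I_N -> nat) k :
  (forall q, u q <= w q)%N -> (Ylt u v k <= Ylt w v k)%N.
Proof. by move=> h; apply: leq_sum => q _; apply: leq_sub2r. Qed.

Lemma per_p (R : realType) (N : nat) (l : 'I_N -> nat) (a : 'I_N -> R[i]) (om : R[i])
    (n m x : mindex l) (p : 'I_N) :
  (forall q, mi n q <= mi x q <= mi m q)%N ->
  'C(mi m p, mi x p)%:R
    * poch ((psum_le (mi x) p + psum_lt (mi m) p + psum_ge l p)%:R + a p + om + 1)
           (mi m p - mi x p)
  * ('C(mi x p, mi n p)%:R
    * poch ((psum_lt (mi x) p + psum_le (mi n) p + psum_ge l p)%:R + a p + om + 1)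
           (mi x p - mi n p))
  * (-1) ^+ (mi x p - mi n p)
  = 'C(mi m p, mi n p)%:R
    * wt (fun p => (psum_le (mi n) p + psum_lt (mi n) p + psum_ge l p)%:R + a p + om + 1)
         n m x p.
Proof.
move=> hx.
have hnx : forall q, (mi n q <= mi x q)%N by move=> q; case/andP: (hx q).
have hxm : forall q, (mi x q <= mi m q)%N by move=> q; case/andP: (hx q).
have hnm : forall q, (mi n q <= mi m q)%N by move=> q; apply: leq_trans (hnx q) (hxm q).
have F1 := @psum_lt_split N (mi x) (mi n) p hnx.
have F2 := @psum_le_lt N (mi x) p.
have F3 := @psum_le_lt N (mi n) p.
have F4 := @psum_lt_split N (mi m) (mi n) p hnm.
have np := hnx p; have xp := hxm p.
rewrite /wt.
have e1 : (psum_lt (mi x) p + psum_le (mi n) p + psum_ge l p)%:R + a p + om + 1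
    = (Ylt (mi x) (mi n) p)%:R
      + ((psum_le (mi n) p + psum_lt (mi n) p + psum_ge l p)%:R + a p + om + 1).
  by rewrite F1 !natrD; ring.
have e2n : (psum_le (mi x) p + psum_lt (mi m) p + psum_ge l p
    = (Ylt (mi x) (mi n) p + (mi x p - mi n p) + Ylt (mi m) (mi n) p)
      + (psum_le (mi n) p + psum_lt (mi n) p + psum_ge l p))%N by lia.
have e2 : (psum_le (mi x) p + psum_lt (mi m) p + psum_ge l p)%:R + a p + om + 1
    = (Ylt (mi x) (mi n) p + (mi x p - mi n p) + Ylt (mi m) (mi n) p)%:R
      + ((psum_le (mi n) p + psum_lt (mi n) p + psum_ge l p)%:R + a p + om + 1).
  by rewrite e2n natrD; ring.
have e3 : (mi m p - mi x p = (mi m p - mi n p) - (mi x p - mi n p))%N by lia.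
rewrite e1 e2 -e3.
transitivity (('C(mi m p, mi x p) * 'C(mi x p, mi n p))%N%:R
   * poch ((Ylt (mi x) (mi n) p + (mi x p - mi n p) + Ylt (mi m) (mi n) p)%:R +
      ((psum_le (mi n) p + psum_lt (mi n) p + psum_ge l p)%:R + a p + om + 1)) (mi m p - mi x p)
   * poch ((Ylt (mi x) (mi n) p)%:R + ((psum_le (mi n) p + psum_lt (mi n) p + psum_ge l p)%:R + a p + om + 1))
      (mi x p - mi n p) * (-1) ^+ (mi x p - mi n p) : R[i]).
  by rewrite natrM; ring.
rewrite binC // natrM; ring.
Qed.

Lemma term_eq (R : realType) (N : nat) (l : 'I_N -> nat) (a : 'I_N -> R[i]) (om : R[i])
    (n m x : mindex l) :
  (forall q, mi n q <= mi x q <= mi m q)%N ->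
  (0 < Ylt (mi m) (mi n) N)%N ->
  poch ((2 * msize (mi n))%:R + om + 1) (2 * Ylt (mi m) (mi n) N - 1) != 0 ->
  coefCbar a om m x * Defs.coefC a om x n
  = (\prod_(p < N) 'C(mi m p, mi n p)%:R)
      / poch ((2 * msize (mi n))%:R + om + 1) (2 * Ylt (mi m) (mi n) N - 1)
    * ((\prod_(p < N)
         wt (fun p => (psum_le (mi n) p + psum_lt (mi n) p + psum_ge l p)%:R + a p + om + 1)
           n m x p)
       * poch ((Ylt (mi x) (mi n) N)%:R + ((2 * msize (mi n))%:R + om + 1))
              (Ylt (mi m) (mi n) N - 1)).
Proof.
move=> hx MM0 K0.
have hnx : forall q, (mi n q <= mi x q)%N by move=> q; case/andP: (hx q).
have hxm : forall q, (mi x q <= mi m q)%N by move=> q; case/andP: (hx q).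
have hnm : forall q, (mi n q <= mi m q)%N by move=> q; apply: leq_trans (hnx q) (hxm q).
set G := fun p => (psum_le (mi n) p + psum_lt (mi n) p + psum_ge l p)%:R + a p + om + 1.
set MM := Ylt (mi m) (mi n) N in MM0 K0 *.
set c := (2 * msize (mi n))%:R + om + 1 in K0 *.
set Y := Ylt (mi x) (mi n) N.
have eX : msize (mi x) = (Y + msize (mi n))%N := @msize_split N (mi x) (mi n) hnx.
have eM : msize (mi m) = (MM + msize (mi n))%N := @msize_split N (mi m) (mi n) hnm.
have YM : (Y <= MM)%N := @Ylt_le N (mi x) (mi n) (mi m) N hxm.
set A := poch c Y.
set PY := poch (Y%:R + c) (MM - 1).
set B := poch ((Y + msize (mi n) + (MM + msize (mi n)))%:R + om) (MM - Y).
have hK : poch c (2 * MM - 1) = A * PY * B.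
  have -> : (2 * MM - 1 = Y + (MM - 1) + (MM - Y))%N by lia.
  rewrite !poch_add /A /PY /B (addrC c); congr (_ * _ * poch _ _).
  have -> : (Y + msize (mi n) + (MM + msize (mi n)) = (2 * msize (mi n)) + (Y + (MM - 1)) + 1)%N
    by lia.
  by rewrite /c !natrD; ring.
move: K0; rewrite hK !mulf_eq0 !negb_or => /andP [/andP [A0 P0] B0].
have HP : (\prod_(p < N) ('C(mi m p, mi x p)%:R
    * poch ((psum_le (mi x) p + psum_lt (mi m) p + psum_ge l p)%:R + a p + om + 1)
           (mi m p - mi x p)))
  * (\prod_(p < N) ('C(mi x p, mi n p)%:R
    * poch ((psum_lt (mi x) p + psum_le (mi n) p + psum_ge l p)%:R + a p + om + 1)
           (mi x p - mi n p)))
  * (-1) ^+ Y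
  = (\prod_(p < N) 'C(mi m p, mi n p)%:R) * \prod_(p < N) wt G n m x p.
  have -> : (-1) ^+ Y = \prod_(p < N) ((-1) ^+ (mi x p - mi n p) : R[i]).
    rewrite /Y /Ylt prodrXr; congr (_ ^+ _).
    by apply: eq_bigl => q; rewrite ltn_ord.
  rewrite -!big_split; apply: eq_bigr => p _ /=.
  exact: per_p.
rewrite /coefCbar /Defs.coefC eX eM.
have -> : (MM + msize (mi n) - (Y + msize (mi n)) = MM - Y)%N by lia.
have -> : (Y + msize (mi n) - msize (mi n) = Y)%N by lia.
rewrite -/A -/B.
transitivity ((\prod_(p < N) ('C(mi m p, mi x p)%:R
    * poch ((psum_le (mi x) p + psum_lt (mi m) p + psum_ge l p)%:R + a p + om + 1)
           (mi m p - mi x p)))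
  * (\prod_(p < N) ('C(mi x p, mi n p)%:R
    * poch ((psum_lt (mi x) p + psum_le (mi n) p + psum_ge l p)%:R + a p + om + 1)
           (mi x p - mi n p)))
  * (-1) ^+ Y / (A * B)).
  by field; rewrite A0 B0.
rewrite HP; field.
by rewrite A0 B0 P0.
Qed.

Lemma left_inv (R : realType) (N : nat) (l : 'I_N -> nat) (a : 'I_N -> R[i]) (om : R[i])
    (n m : mindex l) :
  ~ in_neg_range om (2 * tot l).-1 -> inbox n m ->
  \sum_(x : mindex l | inbox n x && inbox x m) coefCbar a om m x * Defs.coefC a om x n
  = (m == n)%:R.
Proof.
move=> hom hnm.
have hb := inboxP hnm.
have [emn|mn] := eqVneq m n.
  subst m; rewrite (big_pred1 n) => [|x].
    rewrite /coefCbar /Defs.coefC !subnn !poch0 expr0.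
    rewrite big1 => [|p _]; last by rewrite subnn poch0 binn mulr1.
    rewrite big1 => [|p _]; last by rewrite subnn poch0 binn mulr1.
    by rewrite !divr1 !mulr1.
  apply/andP/eqP => [[h1 h2]|->]; last by [].
  apply/ffunP => p; apply: val_inj.
  move: (inboxP h1 p) (inboxP h2 p) => /andP [a1 _] /andP [a2 _].
  by apply: anti_leq; apply/andP; split; [exact: a2 | exact: a1].
have hnm' : forall q, (mi n q <= mi m q)%N by move=> q; case/andP: (hb q).
have eM : msize (mi m) = (Ylt (mi m) (mi n) N + msize (mi n))%N
  := @msize_split N (mi m) (mi n) hnm'.
have Ml : (msize (mi m) <= tot l)%N.
  by rewrite /msize /tot; apply: leq_sum => q _; case/andP: (hb q).
set MM := Ylt (mi m) (mi n) N in eM.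
have MM0 : (0 < MM)%N.
  rewrite lt0n; apply: contra mn => /eqP h0.
  apply/eqP/ffunP => q; apply: val_inj; apply/eqP.
  have : (mi m q - mi n q <= MM)%N.
    by rewrite /MM /Ylt (bigD1 q) ?ltn_ord //= leq_addr.
  rewrite h0 leqn0 subn_eq0 => h.
  by apply/eqP; apply: anti_leq; apply/andP; split; [exact: h | exact: hnm' q].
set c := (2 * msize (mi n))%:R + om + 1.
have K0 : poch c (2 * MM - 1) != 0.
  apply/prodf_neq0 => j _; apply/eqP => h; apply: hom.
  exists (2 * msize (mi n) + 1 + j)%N.
    by have := ltn_ord j; lia.
  transitivity (om - (c + j%:R)); first by rewrite h subr0.
  rewrite /c !natrD; ring.
idtac.
transitivity (\sum_(x : mindex l | inbox n x && inbox x m)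
   (\prod_(p < N) 'C(mi m p, mi n p)%:R) / poch c (2 * MM - 1)
    * ((\prod_(p < N)
         wt (fun p => (psum_le (mi n) p + psum_lt (mi n) p + psum_ge l p)%:R + a p + om + 1)
           n m x p)
       * (fun s => poch (s + c) (MM - 1)) (Ylt (mi x) (mi n) N)%:R)).
  apply: eq_bigr => x hx; apply: term_eq => //.
  by move: hx; rewrite boxP // => /forallP.
have hdeg : deg_lt MM (fun s => poch (s + c) (MM - 1)).
  by have := deg_lt_poch c (MM - 1); rewrite subn1 prednK.
by rewrite -mulr_sumr (@key _ N l n m _ _ hnm hdeg) mulr0.
Qed.

Lemma mzeroE (N : nat) (l : 'I_N -> nat) p : mi (mzero l) p = 0%N.
Proof. by rewrite /mi /mzero ffunE. Qed.

Lemma inbox_trans (N : nat) (l : 'I_N -> nat) (u v w : mindex l) :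
  inbox u v -> inbox v w -> inbox u w.
Proof.
move=> h1 h2; apply/forallP => p.
by move: (inboxP h1 p) (inboxP h2 p); lia.
Qed.

Lemma inbox_low (N : nat) (l : 'I_N -> nat) (u v : mindex l) :
  inbox u v -> inbox (mzero l) u.
Proof.
move=> h; apply/forallP => p; rewrite mzeroE /=.
by move: (inboxP h p); lia.
Qed.

Lemma inbox_up (N : nat) (l : 'I_N -> nat) (u v : mindex l) :
  inbox u v -> inbox (mzero l) v.
Proof.
move=> h; apply/forallP => p; rewrite mzeroE /=.
by move: (inboxP h p); lia.
Qed.

Lemma inbox_refl (N : nat) (l : 'I_N -> nat) (u : mindex l) :
  inbox (mzero l) u -> inbox u u.
Proof.
move=> h; apply/forallP => p; rewrite leqnn /=.
by move: (inboxP h p); lia.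
Qed.

Arguments inbox_trans {N l u v w}.
Arguments inbox_low {N l u v}.
Arguments inbox_up {N l u v}.
Arguments inbox_refl {N l u}.

Definition Afun (R : realType) (N : nat) (l : 'I_N -> nat) (a : 'I_N -> R[i]) (om : R[i])
  (m x : mindex l) : R[i] :=
  if inbox (mzero l) m then (if inbox x m then Defs.coefC a om m x else 0)
  else (m == x)%:R.
Arguments Afun {R N l}.

Definition Bfun (R : realType) (N : nat) (l : 'I_N -> nat) (a : 'I_N -> R[i]) (om : R[i])
  (m x : mindex l) : R[i] :=
  if inbox (mzero l) m then (if inbox x m then coefCbar a om m x else 0)
  else (m == x)%:R.
Arguments Bfun {R N l}.

Lemma BA (R : realType) (N : nat) (l : 'I_N -> nat) (a : 'I_N -> R[i]) (om : R[i])
  (m n : mindex l) :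
  ~ in_neg_range om (2 * tot l).-1 ->
  \sum_(x : mindex l) Bfun a om m x * Afun a om x n = (m == n)%:R.
Proof.
move=> hom.
rewrite /Bfun; case hm: (inbox (mzero l) m); last first.
  rewrite (bigD1 m) //= eqxx mul1r big1 ?addr0 => [|x hx]; last first.
    by rewrite eq_sym (negbTE hx) mul0r.
  by rewrite /Afun hm.
rewrite (eq_bigr (fun x => if inbox x m then coefCbar a om m x * Afun a om x n else 0));
  last by move=> x _; case: ifP; rewrite ?mul0r.
rewrite -big_mkcond /=.
rewrite (eq_bigr (fun x => if inbox n x then coefCbar a om m x * Defs.coefC a om x n else 0));
  last first.
  move=> x hx; rewrite /Afun (inbox_low hx) /=.
  by case: ifP; rewrite ?mulr0.
rewrite -big_mkcondr /=.
rewrite (eq_bigl (fun x => inbox n x && inbox x m)); last by move=> x; rewrite andbC.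
case hnm: (inbox n m).
  exact: left_inv.
rewrite big_pred0; last first.
  move=> x; apply/negP => /andP [h1 h2].
  by move: (inbox_trans h1 h2); rewrite hnm.
have [emn|//] := eqVneq m n.
by subst m; move: hnm; rewrite inbox_refl.
Qed.

Lemma sum_enum (F : nmodType) (T : finType) (f : T -> F) :
  \sum_(k < #|T|) f (enum_val k) = \sum_(x : T) f x.
Proof.
rewrite (reindex (@enum_val T T)) //.
by exists enum_rank => [k _|x _]; [exact: enum_valK | exact: enum_rankK].
Qed.
Arguments sum_enum {F T}.

Lemma VxE (R : realType) (N : nat) (l : 'I_N -> nat) (a : 'I_N -> R[i]) (om : R[i])
    (x m : mindex l) :
  Vx a om x m = if inbox x m then Defs.coefC a om m x else 0.
Proof.
rewrite /Vx sum_ffunE.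
rewrite (eq_bigr (fun j => Defs.coefC a om j x * (m == j)%:R)); last first.
  by move=> j _; rewrite ffunE /basisV ffunE.
case: ifP => hxm.
  rewrite (bigD1 m) //= eqxx mulr1 big1 ?addr0 // => j /andP [_ hj].
  by rewrite eq_sym (negbTE hj) mulr0.
rewrite big1 // => j hj.
have [emj|nmj] := eqVneq m j; last by rewrite mulr0.
by move: hxm; rewrite emj hj.
Qed.

Theorem mainTheorem3 (R : realType) (N : nat) (l : 'I_N -> nat)
    (th0 th0s h hs om oms : R[i]) (a : 'I_N -> R[i]) :
  standing l th0 th0s h hs om oms a ->
  forall n : mindex l, inbox (mzero l) n ->
    basisV n = \sum_(x : mindex l | inbox n x) coefCbar a om x n *: Vx a om x.
Proof.
move=> [_ [_ [_ [hom _]]]] n hn.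
pose T := mindex l.
pose Am : 'M[R[i]]_#|T| := \matrix_(i, j) Afun a om (enum_val i) (enum_val j).
pose Bm : 'M[R[i]]_#|T| := \matrix_(i, j) Bfun a om (enum_val i) (enum_val j).
have hBA : Bm *m Am = 1%:M.
  apply/matrixP => i j; rewrite !mxE.
  rewrite (eq_bigr (fun k => Bfun a om (enum_val i) (enum_val k)
                             * Afun a om (enum_val k) (enum_val j))); last first.
    by move=> k _; rewrite !mxE.
  rewrite (sum_enum (fun x => Bfun a om (enum_val i) x * Afun a om x (enum_val j))).
  by rewrite BA // (inj_eq enum_val_inj).
have hAB := mulmx1C hBA.
apply/ffunP => m.
rewrite {1}/basisV ffunE sum_ffunE.
rewrite (eq_bigr (fun x => coefCbar a om x n
    * (if inbox x m then Defs.coefC a om m x else 0))); last first.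
  by move=> x _; rewrite ffunE VxE.
case hm: (inbox (mzero l) m); last first.
  rewrite big1 => [|x _]; last first.
    case: ifP => hxm; last by rewrite mulr0.
    by move: hm; rewrite (inbox_up hxm).
  have [emn|//] := eqVneq m n.
  by move: hm; rewrite emn hn.
have := congr1 (fun M : 'M[R[i]]_#|T| => M (enum_rank m) (enum_rank n)) hAB.
rewrite /= !mxE (inj_eq enum_rank_inj) => <-.
rewrite (eq_bigr (fun k => Afun a om (enum_val (enum_rank m)) (enum_val k)
                             * Bfun a om (enum_val k) (enum_val (enum_rank n)))); last first.
  by move=> k _; rewrite !mxE.
rewrite (sum_enum (fun x => Afun a om (enum_val (enum_rank m)) x
                             * Bfun a om x (enum_val (enum_rank n)))).
rewrite !enum_rankK [RHS]big_mkcond /=.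
apply: eq_bigr => x _.
rewrite /Afun /Bfun hm.
case hxm: (inbox x m); last by rewrite mul0r; case: ifP; rewrite ?mulr0.
rewrite (inbox_low hxm).
by case: ifP => _; rewrite ?mulr0 ?mul0r // mulrC.
Qed.
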